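(* For every integer $k\ge 6$, there are infinitely many (pairwise non-isomorphic) $k$-vertex-critical graphs that are both $P_5$-free and $C_5$-free.
   Context: $\chi(G)$ denotes the chromatic number of $G$. A graph $G$ is $k$-vertex-critical if $\chi(G)=k$ and $\chi(G-v)<k$ for every vertex $v$ of $G$. $P_5$ is the path on five vertices and $C_5$ is the 5-cycle. A graph is $H$-free if it contains no induced subgraph isomorphic to $H$. *)

(* Defs.v *)
From mathcomp Require Import all_boot.
Set Implicit Arguments. Unset Strict Implicit. Unset Printing Implicit Defensive.

Definition simple_graph (T : finType) (e : rel T) : Prop :=
  symmetric e /\ irreflexive e.

Definition colorable_on (T : finType) (e : rel T) (S : {set T}) (k : nat) : Prop :=
  exists c : T -> 'I_k, forall x y, x \in S -> y \in S -> e x y -> c x != c y.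

Definition chi_on (T : finType) (e : rel T) (S : {set T}) (k : nat) : Prop :=
  colorable_on e S k /\ forall j, colorable_on e S j -> k <= j.

Definition chi (T : finType) (e : rel T) (k : nat) : Prop := chi_on e setT k.

Definition vertex_critical (T : finType) (e : rel T) (k : nat) : Prop :=
  chi e k /\ forall v : T, forall j, chi_on e [set~ v] j -> j < k.

Definition induced_sub (m : nat) (h : rel 'I_m) (T : finType) (e : rel T) : Prop :=
  exists f : 'I_m -> T, injective f /\ forall i j, e (f i) (f j) = h i j.

Definition H_free (m : nat) (h : rel 'I_m) (T : finType) (e : rel T) : Prop :=
  ~ induced_sub h e.

Definition P5 : rel 'I_5 := fun i j => (i.+1 == j :> nat) || (j.+1 == i :> nat).
Definition C5 : rel 'I_5 :=
  fun i j => (j == (i.+1 %% 5) :> nat) || (i == (j.+1 %% 5) :> nat).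

(* Main.v *)
Require Import Defs.
From mathcomp Require Import all_boot zify.
Set Implicit Arguments. Unset Strict Implicit. Unset Printing Implicit Defensive.

Definition dist (x y : nat) := (x - y) + (y - x).
Definition fs (n x y : nat) := if x <= y then y - x else y + n - x.
Definition cg (n d : nat) : rel 'I_n := fun x y => (d <= dist x y) && (dist x y <= n - d).

Lemma farE n d (x y : 'I_n) : cg d x y = true -> d <= dist x y /\ dist x y <= n - d.
Proof. by move/andP. Qed.

Lemma closeE n d (x y : 'I_n) : cg d x y = false -> dist x y < d \/ n - d < dist x y.
Proof. by move/negbT; rewrite negb_and -!ltnNge => /orP. Qed.

Lemma closeF n d (x y : 'I_n) : cg d x y = false -> fs n x y < d \/ fs n y x < d.
Proof.
move/closeE; have := ltn_ord x; have := ltn_ord y.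
rewrite /fs /dist; case: ifP => ?; case: ifP => ?; lia.
Qed.

Lemma lemA n d x y z : 0 < d -> 2 * d < n -> x < n -> y < n -> z < n ->
  d <= dist y z -> dist y z <= n - d -> fs n x y < d -> fs n x z < d -> False.
Proof.
rewrite /fs /dist ; do 2 (case: ifP => ?); lia.
Qed.

Lemma lemB n d x y z : 0 < d -> 2 * d < n -> x < n -> y < n -> z < n ->
  d <= dist y z -> dist y z <= n - d -> fs n y x < d -> fs n z x < d -> False.
Proof.
rewrite /fs /dist ; do 2 (case: ifP => ?); lia.
Qed.

Lemma fs_anti n d x y : 0 < d -> 2 * d < n -> x < n -> y < n -> x != y ->
  fs n x y < d -> fs n y x < d -> False.
Proof. rewrite /fs ; do 2 (case: ifP => ?); lia. Qed.

Lemma sum5 n d y0 y1 y2 y3 y4 : 0 < d -> 5 * d < n ->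
  y0 < n -> y1 < n -> y2 < n -> y3 < n -> y4 < n -> y0 != y2 ->
  fs n y0 y1 < d -> fs n y1 y2 < d -> fs n y2 y3 < d -> fs n y3 y4 < d -> fs n y4 y0 < d -> False.
Proof. rewrite /fs ; do 5 (case: ifP => ?); lia. Qed.

Definition C n d x y := fs n x y < d \/ fs n y x < d.
Definition F n d x y := d <= dist x y /\ dist x y <= n - d.

Lemma C_sym n d x y : C n d x y -> C n d y x.
Proof. by rewrite /C; case; auto. Qed.
Lemma F_sym n d x y : F n d x y -> F n d y x.
Proof. by rewrite /F /dist addnC. Qed.

Lemma opp n d x y z : 0 < d -> 5 * d < n -> x < n -> y < n -> z < n ->
  C n d x y -> C n d x z -> F n d y z ->
  (fs n x y < d /\ fs n z x < d) \/ (fs n y x < d /\ fs n x z < d).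
Proof.
move=> d0 dn xn yn zn [h1|h1] [h2|h2] [f1 f2].
- by case: (lemA d0 _ xn yn zn f1 f2 h1 h2); lia.
- by left.
- by right.
- by case: (lemB d0 _ xn yn zn f1 f2 h1 h2); lia.
Qed.

Lemma K4 n d a b c e : 0 < d -> 5 * d < n -> a < n -> b < n -> c < n -> e < n ->
  fs n a c < d -> fs n e a < d ->
  (fs n b c < d /\ fs n e b < d \/ fs n c b < d /\ fs n b e < d) ->
  F n d a b -> F n d c e -> False.
Proof.
rewrite /F /dist => d0 dn an bn cn en h1 h2 [[h3 h4]|[h3 h4]] [f1 f2] [f3 f4];
move: h1 h2 h3 h4; rewrite /fs; do 4 (case: ifP => ?); lia.
Qed.

Lemma no2K2 n d a b c e : 0 < d -> 5 * d < n -> a < n -> b < n -> c < n -> e < n ->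
  F n d a b -> F n d c e -> C n d a c -> C n d a e -> C n d b c -> C n d b e -> False.
Proof.
move=> d0 dn an bn cn en fab fce cac cae cbc cbe.
have hb := opp d0 dn bn cn en cbc cbe fce.
case: (opp d0 dn an cn en cac cae fce) => [[h1 h2]|[h1 h2]].
- exact: (K4 d0 dn an bn cn en h1 h2 hb fab fce).
- apply: (K4 d0 dn an bn en cn h2 h1 _ fab (F_sym fce)).
  by case: hb => [[??]|[??]]; [right|left].
Qed.

Lemma c5o n d y0 y1 y2 y3 y4 : 0 < d -> 5 * d < n ->
  y0 < n -> y1 < n -> y2 < n -> y3 < n -> y4 < n ->
  fs n y0 y1 < d -> C n d y1 y2 -> C n d y2 y3 -> C n d y3 y4 -> C n d y4 y0 ->
  F n d y0 y2 -> F n d y1 y3 -> F n d y2 y4 -> F n d y3 y0 -> F n d y4 y1 -> False.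
Proof.
move=> d0 dn n0 n1 n2 n3 n4 h01 c12 c23 c34 c40 [f02 g02] [f13 g13] [f24 g24] [f30 g30] [f41 g41].
have dn2 : 2 * d < n by lia.
have h12 : fs n y1 y2 < d.
  by case: c12 => // h; case: (lemB d0 dn2 n1 n0 n2 f02 g02 h01 h).
have h23 : fs n y2 y3 < d.
  by case: c23 => // h; case: (lemB d0 dn2 n2 n1 n3 f13 g13 h12 h).
have h34 : fs n y3 y4 < d.
  by case: c34 => // h; case: (lemB d0 dn2 n3 n2 n4 f24 g24 h23 h).
have h40 : fs n y4 y0 < d.
  case: c40 => // h; have f03 : d <= dist y0 y3 by rewrite /dist addnC.
  have g03 : dist y0 y3 <= n - d by rewrite /dist addnC.
  by case: (lemB d0 dn2 n4 n3 n0 _ _ h34 h); rewrite /dist addnC.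
apply: (sum5 d0 dn n0 n1 n2 n3 n4 _ h01 h12 h23 h34 h40).
apply/eqP => e; move: f02; rewrite e /dist subnn; lia.
Qed.

Lemma noC5 n d y0 y1 y2 y3 y4 : 0 < d -> 5 * d < n ->
  y0 < n -> y1 < n -> y2 < n -> y3 < n -> y4 < n ->
  C n d y0 y1 -> C n d y1 y2 -> C n d y2 y3 -> C n d y3 y4 -> C n d y4 y0 ->
  F n d y0 y2 -> F n d y1 y3 -> F n d y2 y4 -> F n d y3 y0 -> F n d y4 y1 -> False.
Proof.
move=> d0 dn n0 n1 n2 n3 n4 [h|h] c12 c23 c34 c40 f02 f13 f24 f30 f41.
- exact: (c5o d0 dn n0 n1 n2 n3 n4 h c12 c23 c34 c40 f02 f13 f24 f30 f41).
- apply: (c5o d0 dn n1 n0 n4 n3 n2 h (C_sym c40) (C_sym c34) (C_sym c23) (C_sym c12)).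
  + exact: F_sym f41.
  + exact: F_sym f30.
  + exact: F_sym f24.
  + exact: F_sym f13.
  + exact: F_sym f02.
Qed.

Ltac fsl := rewrite /C /F /fs /dist; repeat (case: ifP => ?); lia.

Lemma indep n d (A : {pred 'I_n}) : 0 < d -> 5 * d < n ->
  (forall x y : 'I_n, x \in A -> y \in A -> C n d x y) -> #|A| <= d.
Proof.
move=> d0 dn hA.
case: (pickP A) => [a0 Ha0|A0]; last by rewrite (eq_card0 A0).
case: (arg_minnP (fun x : 'I_n => val x) Ha0) => a Ha amin.
have [r [rn hr]] : exists r, r < n /\ forall x : 'I_n, x \in A -> fs n r x < d.
  case: (pickP [pred x : 'I_n | (x \in A) && (a + d <= x)]) => [u0 Hu0 | U0].
  - case: (arg_minnP (fun x : 'I_n => val x) Hu0) => u /andP[Hu ud] umin.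
    exists u; split => // x Hx.
    have cax := hA a x Ha Hx; have cau := hA a u Ha Hu; have cxu := hA x u Hx Hu.
    have ax : a <= x := amin x Hx; have xn := ltn_ord x; have un := ltn_ord u.
    case: (leqP (a + d) x) => hx.
    + have ux : u <= x by apply: (umin x); rewrite /= Hx hx.
      move: cax cau cxu; fsl.
    + move: cax cau cxu; fsl.
  - exists a; split => // x Hx.
    have := U0 x; rewrite /= Hx /= => /negbT; rewrite -ltnNge => hx.
    have ax : a <= x := amin x Hx; have xn := ltn_ord x; have an := ltn_ord a.
    move: hx ax; fsl.
rewrite cardE.
have inj : {in enum A &, injective (fun x : 'I_n => fs n r x)}.
  move=> x y _ _ /= h; apply: ord_inj; move: h.
  have := ltn_ord x; have := ltn_ord y; rewrite /fs; repeat (case: ifP => ?); lia.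
rewrite -(size_map (fun x : 'I_n => fs n r x)) -(size_iota 0 d).
apply: uniq_leq_size; first by rewrite map_inj_in_uniq ?enum_uniq.
move=> i /mapP [x Hx ->]; rewrite mem_iota add0n /=; apply: hr.
by rewrite mem_enum in Hx.
Qed.

Lemma lower n d j (c : 'I_n -> 'I_j) : 0 < d -> 5 * d < n ->
  (forall x y, cg d x y -> c x != c y) -> n <= j * d.
Proof.
move=> d0 dn hc.
have -> : n = \sum_(x : 'I_n) 1 by rewrite sum1_card card_ord.
rewrite (partition_big c predT) //=.
have -> : j * d = \sum_(i < j) d by rewrite sum_nat_const card_ord.
apply: leq_sum => i _.
rewrite sum1_card; apply: indep => // x y; rewrite /in_mem /= => /eqP hx /eqP hy.
case E : (cg d x y); last exact: closeF E.
by move: (hc x y E); rewrite (ord_inj hx) (ord_inj hy) eqxx.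
Qed.

Lemma divclose a b d : 0 < d -> a %/ d = b %/ d -> a < b + d.
Proof.
move=> d0 h; rewrite (divn_eq a d) (divn_eq b d) h.
have := ltn_pmod a d0; have := ltn_pmod b d0.
move: (a %% d) (b %% d) (b %/ d * d) => p q r; lia.
Qed.

Lemma mainlem m d n : 5 <= m -> 0 < d -> n = m * d + 1 ->
  simple_graph (@cg n d) /\ vertex_critical (@cg n d) m.+1 /\
  H_free P5 (@cg n d) /\ H_free C5 (@cg n d).
Proof.
move=> m5 d0 hn.
have md : 5 * d <= m * d by rewrite leq_mul2r m5 orbT.
have dn : 5 * d < n by move: md; rewrite hn; move: (m * d) => t; lia.
have m0 : 0 < m by lia.
split; [split|split; [split; [split|]|split]].
- by move=> x y; rewrite /cg /dist addnC.
- by move=> x; rewrite /cg /dist subnn leqNgt d0.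
- exists (fun x : 'I_n => Ordinal (ltn_pmod (x %/ d) (ltn0Sn m))) => x y _ _ hxy.
  apply/negP => /eqP [].
  have bx : forall z : 'I_n, z %/ d < m.+1.
    move=> z; rewrite ltn_divLR // mulSn; have := ltn_ord z; have := hn.
    move: (m * d) => t; lia.
  rewrite !modn_small // => h.
  have h1 := divclose d0 h; have h2 := divclose d0 (esym h).
  case: (farE hxy); rewrite /dist; lia.
- move=> j [c hc].
  have := lower d0 dn (fun x y hxy => hc x y (in_setT x) (in_setT y) hxy).
  case: (leqP m.+1 j) => // hj.
  have : j * d <= m * d by rewrite leq_mul2r -ltnS hj orbT.
  rewrite hn; move: (j * d) (m * d) => s t; lia.
- move=> v j [_ hmin].
  suff : j <= m by [].
  apply: hmin.
  exists (fun x : 'I_n => Ordinal (ltn_pmod ((fs n v x - 1) %/ d) m0)) => x y.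
  rewrite !in_setC1 => hx hy hxy.
  have hx' : nat_of_ord x <> nat_of_ord v by move=> e; move: hx; rewrite (ord_inj e) eqxx.
  have hy' : nat_of_ord y <> nat_of_ord v by move=> e; move: hy; rewrite (ord_inj e) eqxx.
  apply/negP => /eqP [].
  have bx : forall z : 'I_n, (fs n v z - 1) %/ d < m.
    move=> z; rewrite ltn_divLR //; have := ltn_ord z; have := ltn_ord v; have := hn; rewrite /fs.
    move: (m * d) => t; case: ifP => ?; lia.
  rewrite !modn_small // => h.
  have h1 := divclose d0 h; have h2 := divclose d0 (esym h).
  move: h1 h2 (farE hxy); have := ltn_ord x; have := ltn_ord y; have := ltn_ord v.
  rewrite /fs /dist; do 2 (case: ifP => ?); lia.
- move=> [f [_ hf]].
  have E := fun i j (hi : i < 5) (hj : j < 5) => hf (Ordinal hi) (Ordinal hj).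
  have e01 := E 0 1 isT isT; have e34 := E 3 4 isT isT.
  have e03 := E 0 3 isT isT; have e04 := E 0 4 isT isT.
  have e13 := E 1 3 isT isT; have e14 := E 1 4 isT isT.
  rewrite /P5 /= in e01 e34 e03 e04 e13 e14.
  exact: (no2K2 d0 dn (ltn_ord _) (ltn_ord _) (ltn_ord _) (ltn_ord _)
    (farE e01) (farE e34) (closeF e03) (closeF e04) (closeF e13) (closeF e14)).
- move=> [f [_ hf]].
  have E := fun i j (hi : i < 5) (hj : j < 5) => hf (Ordinal hi) (Ordinal hj).
  have e02 := E 0 2 isT isT; have e24 := E 2 4 isT isT.
  have e41 := E 4 1 isT isT; have e13 := E 1 3 isT isT; have e30 := E 3 0 isT isT.
  have e04 := E 0 4 isT isT; have e21 := E 2 1 isT isT.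
  have e43 := E 4 3 isT isT; have e10 := E 1 0 isT isT; have e32 := E 3 2 isT isT.
  rewrite /C5 /= in e02 e24 e41 e13 e30 e04 e21 e43 e10 e32.
  exact: (noC5 d0 dn (ltn_ord _) (ltn_ord _) (ltn_ord _) (ltn_ord _) (ltn_ord _)
    (closeF e02) (closeF e24) (closeF e41) (closeF e13) (closeF e30)
    (farE e04) (farE e21) (farE e43) (farE e10) (farE e32)).
Qed.

Theorem corollary2p8 :
  forall k : nat, 6 <= k ->
  forall N : nat, exists (n : nat) (e : rel 'I_n),
    N < n /\ simple_graph e /\ vertex_critical e k /\ H_free P5 e /\ H_free C5 e.
Proof.
move=> k hk N.
have hm : 5 <= k.-1 by lia.
exists (k.-1 * N.+1 + 1), (@cg (k.-1 * N.+1 + 1) N.+1).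
have := mainlem hm (ltn0Sn N) (erefl _).
rewrite prednK; last by lia.
move=> H; split => //.
have : 5 * N.+1 <= k.-1 * N.+1 by rewrite leq_mul2r hm orbT.
move: (k.-1 * N.+1) => t; lia.
Qed.
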